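(* Let $d,N\ge1$ and $P\in\{0,\dots,d-1\}$. Let $\mathcal H_N^{(P)}$ be the subspace of the bosonic $N$-particle space $\mathrm{Sym}^N(\mathbb C^d)$ spanned by the permanents $|m_0,\dots,m_{d-1}\rangle$ with $\sum_k m_k=N$ and $\sum_{k=0}^{d-1}k\,m_k\equiv P\pmod d$, and let $W$ be any Hermitian operator on $\mathcal H_N^{(P)}$. Define, for $m\in\mathbb R^d$, $$\mathcal F_p^{(P)}(m)=\min\{\langle\Psi|W|\Psi\rangle:\Psi\in\mathcal H_N^{(P)},\|\Psi\|=1,\langle\Psi|n_k|\Psi\rangle=m_k\ \forall k\},\qquad \mathcal F_e^{(P)}(m)=\min\{\mathrm{Tr}(\Gamma W):\Gamma\text{ density operator on }\mathcal H_N^{(P)},\ \mathrm{Tr}(\Gamma n_k)=m_k\ \forall k\},$$ with domain the set of $m$ for which the respective constraint set is nonempty. Then the domains of $\mathcal F_p^{(P)}$ and $\mathcal F_e^{(P)}$ coincide and both equal $$\mathrm{conv}\Big\{m\in\mathbb N_0^d:\ \sum_{k=0}^{d-1}m_k=N,\ \sum_{k=0}^{d-1}k\,m_k\equiv P\pmod d\Big\}.$$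
   Context: $b_k^\dagger,b_k$ are bosonic creation/annihilation operators for momentum mode $k\in\{0,\dots,d-1\}$ on a $d$-site periodic lattice, $n_k=b_k^\dagger b_k$ is the momentum-space number operator, and $|m_0,\dots,m_{d-1}\rangle\propto\prod_k(b_k^\dagger)^{m_k}|\mathrm{vac}\rangle$ is the normalized permanent with $m_k$ bosons in momentum $k$. *)

(* Defs.v *)
From mathcomp Require Import all_boot all_order all_fingroup all_algebra.
From mathcomp Require Import complex.
Set Implicit Arguments. Unset Strict Implicit. Unset Printing Implicit Defensive.
Import Order.TTheory GRing.Theory Num.Theory.
Local Open Scope ring_scope.

Section Bosons.
Variables (R : rcfType) (d N : nat) (P : 'I_d).
Local Notation C := R[i].

(* Tensor-product basis of (C^d)^{\otimes N}: each particle j < N sits in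
   momentum mode x j < d. A vector is a function Conf -> C. *)
Definition Conf := {ffun 'I_N -> 'I_d}.

(* number of particles in mode k in basis configuration x:
   n_k = sum_j (|k><k|)_j is diagonal in this basis with this eigenvalue *)
Definition occ (k : 'I_d) (x : Conf) : nat := #|[set j | x j == k]|.

Definition totmom (x : Conf) : nat := \sum_(j < N) (x j : nat).

Definition permconf (s : 'S_N) (x : Conf) : Conf := [ffun j => x (s j)].

(* membership in H_N^(P): symmetric (bosonic) vectors supported on
   basis configurations of total momentum = P mod d *)
Definition inH (v : Conf -> C) : Prop :=
  (forall (s : 'S_N) x, v (permconf s x) = v x) /\
  (forall x, (totmom x %% d)%N != P -> v x = 0).

Definition applyop (G : Conf -> Conf -> C) (v : Conf -> C) : Conf -> C :=
  fun x => \sum_y G x y * v y.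

(* density operator on H_N^(P): Hermitian, positive semidefinite, trace one,
   with range contained in H_N^(P) (hence, being Hermitian, it vanishes on
   the orthogonal complement: it is an operator on H_N^(P)). *)
Definition density_op (G : Conf -> Conf -> C) : Prop :=
  [/\ forall x y, G x y = (G y x)^*,
      forall v : Conf -> C, 0 <= \sum_x (v x)^* * applyop G v x,
      \sum_x G x x = 1 &
      forall v, inH (applyop G v)].

Definition expect_n (Psi : Conf -> C) (k : 'I_d) : C :=
  \sum_x (Psi x)^* * Psi x * (occ k x)%:R.

Definition trace_n (G : Conf -> Conf -> C) (k : 'I_d) : C :=
  \sum_x G x x * (occ k x)%:R.

Definition pure_domain (m : 'I_d -> R) : Prop :=
  exists Psi : Conf -> C,
    [/\ inH Psi, \sum_x (Psi x)^* * Psi x = 1 &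
        forall k, expect_n Psi k = ((m k)%:C)%C].

Definition ensemble_domain (m : 'I_d -> R) : Prop :=
  exists G : Conf -> Conf -> C,
    density_op G /\ forall k, trace_n G k = ((m k)%:C)%C.

(* occupation vectors m in N_0^d with sum_k m_k = N and sum_k k m_k = P mod d;
   every such m has m_k <= N, so they are represented in the finite type
   {ffun 'I_d -> 'I_N.+1} *)
Definition admissible (c : {ffun 'I_d -> 'I_N.+1}) : bool :=
  ((\sum_(k < d) (c k : nat))%N == N) && ((\sum_(k < d) (k : nat) * c k) %% d == P)%N.

Definition in_conv_admissible (m : 'I_d -> R) : Prop :=
  exists lam : {ffun 'I_d -> 'I_N.+1} -> R,
    [/\ forall c, 0 <= lam c,
        forall c, ~~ admissible c -> lam c = 0,
        \sum_c lam c = 1 &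
        forall k, m k = \sum_c lam c * (c k : nat)%:R].

End Bosons.

(* Main.v *)
Require Import Defs.
From mathcomp Require Import all_boot all_order all_fingroup all_algebra.
From mathcomp Require Import complex.
From mathcomp Require Import ring.
Set Implicit Arguments. Unset Strict Implicit. Unset Printing Implicit Defensive.
Import Order.TTheory GRing.Theory Num.Theory.
Local Open Scope ring_scope.

Section Aux.
Variables (d N : nat) (P : 'I_d).
Hypothesis hd : (0 < d)%N.

Definition occv (x : Conf d N) : {ffun 'I_d -> 'I_N.+1} := [ffun k => inord (occ k x)].

Lemma occ_le k (x : Conf d N) : (occ k x <= N)%N.
Proof. by rewrite /occ; apply: leq_trans (max_card _) _; rewrite card_ord. Qed.

Lemma occvE k x : (occv x k : nat) = occ k x.
Proof. by rewrite ffunE inordK // ltnS occ_le. Qed.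

Lemma occ_perm s k (x : Conf d N) : occ k (permconf s x) = occ k x.
Proof.
rewrite /occ -(card_preimset [set j | x j == k] (@perm_inj _ s)).
by apply: eq_card => j; rewrite !inE ffunE.
Qed.

Lemma occv_perm s (x : Conf d N) : occv (permconf s x) = occv x.
Proof. by apply/ffunP => k; rewrite !ffunE occ_perm. Qed.

Lemma sum_occ (x : Conf d N) : (\sum_k occ k x)%N = N.
Proof.
rewrite -{2}[N]card_ord -sum1_card (partition_big x predT) //=.
apply: eq_bigr => k _; rewrite /occ sum1_card; apply: eq_card => j.
by rewrite inE.
Qed.

Lemma totmomE (x : Conf d N) : totmom x = (\sum_(k < d) k * occ k x)%N.
Proof.
rewrite /totmom (partition_big x predT) //=.
apply: eq_bigr => k _.
rewrite (eq_bigr (fun _ => (k : nat))); last by move=> j /eqP ->.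
rewrite sum_nat_const mulnC /occ; congr (_ * _)%N; apply: eq_card => j.
by rewrite inE.
Qed.

Lemma adm_occv x : admissible P (occv x) = (totmom x %% d == P)%N.
Proof.
rewrite /admissible (eq_bigr (fun k => occ k x)); last by move=> k _; rewrite occvE.
rewrite sum_occ eqxx /= totmomE; congr (_ %% _ == _)%N.
by apply: eq_bigr => k _; rewrite occvE.
Qed.

Lemma exists_conf (c : {ffun 'I_d -> 'I_N.+1}) :
  (\sum_k (c k : nat))%N = N -> exists x : Conf d N, occv x = c.
Proof.
move=> hs.
pose k0 : 'I_d := Ordinal hd.
pose s := flatten [seq nseq (c k : nat) k | k <- enum 'I_d].
have ss : size s = N.
  rewrite size_flatten /shape -map_comp sumnE big_map.
  rewrite big_enum /= -[RHS]/(N) -{}[in RHS]hs; apply: eq_bigr => k _; by rewrite /= size_nseq.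
exists [ffun j : 'I_N => nth k0 s j].
apply/ffunP => k; apply: ord_inj; rewrite occvE /occ.
have -> : #|[set j : 'I_N | [ffun j0 : 'I_N => nth k0 s j0] j == k]| = count (pred1 k) s.
  have e : map (fun j : 'I_N => nth k0 s j) (enum 'I_N) = s.
    by rewrite (map_comp (nth k0 s) val) /= val_enum_ord -ss -/(mkseq _ _) mkseq_nth.
  rewrite -[in RHS]e count_map cardE size_filter.
  by rewrite -enumT; apply: eq_count => j; rewrite !inE ffunE.
rewrite /s count_flatten -map_comp sumnE big_map big_enum /=.
rewrite (bigD1 k) //= count_nseq /= eqxx mul1n big1 ?addn0 // => k' /negPf.
by rewrite count_nseq /= => ->.
Qed.


Variable R : rcfType.

Lemma conv_of_weights (w : Conf d N -> R) (m : 'I_d -> R) :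
  (forall x, 0 <= w x) -> (forall x, (totmom x %% d != P)%N -> w x = 0) ->
  \sum_x w x = 1 -> (forall k, m k = \sum_x w x * (occ k x)%:R) ->
  in_conv_admissible N P m.
Proof.
move=> w0 wP w1 wm.
have sw (F : {ffun 'I_d -> 'I_N.+1} -> R) :
    \sum_x w x * F (occv x) = \sum_c (\sum_(x | occv x == c) w x) * F c.
  rewrite (partition_big occv predT) //=; apply: eq_bigr => c _.
  by rewrite mulr_suml; apply: eq_bigr => x /eqP ->.
exists (fun c => \sum_(x | occv x == c) w x); split.
- by move=> c; apply: sumr_ge0.
- move=> c nc; apply: big1 => x /eqP ox; apply: wP.
  by rewrite -adm_occv ox.
- rewrite -w1 (eq_bigr (fun x => w x * 1)); last by move=> x _; rewrite mulr1.
  by rewrite (sw (fun _ => 1)); apply: eq_bigr => c _; rewrite mulr1.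
- move=> k; rewrite wm.
  rewrite (eq_bigr (fun x => w x * (fun c : {ffun 'I_d -> 'I_N.+1} => (c k : nat)%:R) (occv x))).
    exact: (sw (fun c : {ffun 'I_d -> 'I_N.+1} => (c k : nat)%:R)).
  by move=> x _; rewrite /= occvE.
Qed.

Section Lam.
Variable lam : {ffun 'I_d -> 'I_N.+1} -> R.
Hypothesis lam0 : forall c, ~~ admissible P c -> lam c = 0.

Definition Mc (c : {ffun 'I_d -> 'I_N.+1}) := #|[set x : Conf d N | occv x == c]|.
Definition wl (x : Conf d N) := lam (occv x) / (Mc (occv x))%:R.

Lemma sum_wl (F : {ffun 'I_d -> 'I_N.+1} -> R) :
  \sum_x wl x * F (occv x) = \sum_c lam c * F c.
Proof.
rewrite (partition_big occv predT) //=; apply: eq_bigr => c _.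
under eq_bigr => x /eqP ox do rewrite /wl ox.
rewrite sumr_const.
have [->|nz] := eqVneq (lam c) 0; first by rewrite !mul0r mul0rn.
have ad : admissible P c by apply: contraNT nz => /lam0 ->.
have [x ox] : exists x : Conf d N, occv x = c.
  by apply: exists_conf; move: ad => /andP[/eqP].
have Mp : (0 < Mc c)%N by apply/card_gt0P; exists x; rewrite inE ox.
have -> : #|[pred x0 | occv x0 == c]| = Mc c.
  by apply: eq_card => y; rewrite !inE.
have nz' : (Mc c)%:R != 0 :> R by rewrite pnatr_eq0 -lt0n.
rewrite -mulr_natr; field.
by rewrite nz'.
Qed.

End Lam.
End Aux.

Theorem theorem3p2 (R : rcfType) (d N : nat) (P : 'I_d)
    (hd : (0 < d)%N) (hN : (0 < N)%N) :
  forall m : 'I_d -> R,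
    (pure_domain N P m <-> in_conv_admissible N P m) /\
    (ensemble_domain N P m <-> in_conv_admissible N P m).
Proof.
move=> m.
have pe : pure_domain N P m -> ensemble_domain N P m.
  move=> [Psi [[sym supp] n1 ex]].
  exists (fun x y => Psi x * (Psi y)^*); split; first split.
  - by move=> x y; rewrite rmorphM /= conjCK mulrC.
  - move=> v; rewrite /applyop.
    pose S := \sum_y (Psi y)^* * v y.
    have -> : \sum_x (v x)^* * (\sum_y Psi x * (Psi y)^* * v y) = S^* * S.
      rewrite rmorph_sum /= mulr_suml; apply: eq_bigr => x _.
      rewrite rmorphM /= conjCK mulr_sumr mulr_sumr; apply: eq_bigr => y _.
      by rewrite !mulrA [_ * Psi x]mulrC.
    by rewrite mulrC mul_conjC_ge0.
  - by rewrite -n1; apply: eq_bigr => x _; rewrite mulrC.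
  - move=> v; split.
      by move=> s x; rewrite /applyop; apply: eq_bigr => y _; rewrite sym.
    by move=> x /supp hx; rewrite /applyop big1 // => y _; rewrite hx !mul0r.
  - by move=> k; rewrite -ex /trace_n /expect_n; apply: eq_bigr => x _; rewrite (mulrC (Psi x)).
have ec : ensemble_domain N P m -> in_conv_admissible N P m.
  move=> [G [[herm psd tr rng] tn]].
  have delta (F : Conf d N -> R[i]) x : \sum_z F z * (z == x)%:R = F x.
    rewrite (bigD1 x) //= eqxx mulr1 big1 ?addr0 // => z /negPf ->.
    by rewrite mulr0.
  have Gxy x y : (totmom x %% d != P)%N -> G x y = 0.
    move=> hx; have [_ h] := rng (fun z => (z == y)%:R).
    by move: (h x hx); rewrite /applyop delta.
  have real x : (@complex.Re R (G x x))%:C%C = G x x.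
    by apply: RRe_real; apply/CrealP; rewrite -herm.
  have pos x : 0 <= G x x.
    move: (psd (fun z => (z == x)%:R)); rewrite /applyop.
    under eq_bigr do rewrite delta.
    rewrite (bigD1 x) //= big1 ?addr0; first by rewrite eqxx rmorph1 mul1r.
    by move=> z /negPf ->; rewrite rmorph0 mul0r.
  apply: (conv_of_weights (w := fun x => @complex.Re R (G x x))).
  - by move=> x; rewrite -ler0c real.
  - by move=> x hx; rewrite Gxy.
  - apply: complexI; rewrite rmorph_sum rmorph1 -tr.
    by apply: eq_bigr => x _; rewrite /= real.
  - move=> k; apply: complexI; rewrite -tn /trace_n rmorph_sum.
    by apply: eq_bigr => x _; rewrite rmorphM /= real rmorph_nat.
have cp : in_conv_admissible N P m -> pure_domain N P m.
  move=> [lam [l0 ln l1 lm]].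
  pose w := wl lam.
  have w0 x : 0 <= w x by apply: divr_ge0 => //; apply: l0.
  have sq x : ((Num.sqrt (w x))%:C%C)^* * (Num.sqrt (w x))%:C%C = (w x)%:C%C.
    by rewrite conj_Creal ?complex_real // -rmorphM -expr2 sqr_sqrtr.
  exists (fun x => (Num.sqrt (w x))%:C%C); split.
  - split.
      by move=> s x; rewrite /w /wl occv_perm.
    move=> x hx; rewrite /w /wl ln ?mul0r ?sqrtr0 ?rmorph0 //.
    by rewrite adm_occv.
  - under eq_bigr do rewrite sq.
    transitivity ((\sum_x w x)%:C%C); first by rewrite rmorph_sum.
    have -> : \sum_x w x = 1.
      rewrite -l1; have := sum_wl hd ln (fun _ => 1).
      under eq_bigr do rewrite mulr1.
      by under [in RHS]eq_bigr do rewrite mulr1.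
    by rewrite rmorph1.
  - move=> k; rewrite /expect_n; under eq_bigr do rewrite sq.
    rewrite lm -(sum_wl hd ln (fun c => (c k : nat)%:R)) rmorph_sum /=.
    by apply: eq_bigr => x _; rewrite [in RHS]rmorphM [in RHS]rmorph_nat occvE.
by split; split; auto.
Qed.
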